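(* Let $\{\tilde{\mathcal{T}}_n\}_{n\ge K}$ be a $K$-type Community Weighted Recursive Tree with type probabilities $p_1,\dots,p_K$ and positive weights $(\omega_{ij})$, and for $k\ge 0$ let $N_k(n)$ be the number of vertices of out-degree $k$ in $\tilde{\mathcal{T}}_n$. Then for each fixed $k$, $N_k(n)/n\to\tilde c_k$ in probability as $n\to\infty$, where $$\tilde c_k=\sum_{i=1}^K\frac{p_i}{1+\tilde r_i}\left(\frac{\tilde r_i}{1+\tilde r_i}\right)^k,\qquad \tilde r_i=\sum_{j=1}^K\frac{p_j\omega_{ji}}{\sum_{l=1}^K p_l\omega_{jl}}.$$
   Context: $K$-type Community Weighted Recursive Tree (CWRT): fix $K\ge 2$, a probability vector $(p_1,\dots,p_K)$ with $p_1=\max_i p_i>0$, and positive weights $\omega_{ij}$, $1\le i,j\le K$. The initial tree $\tilde{\mathcal{T}}_K$ is a uniform random recursive tree on vertices $\{1,\dots,K\}$ whose vertices are assigned types $1,\dots,K$ via a uniform random permutation (one vertex of each type). For $n>K$, vertex $n$ is added to $\tilde{\mathcal{T}}_{n-1}$: it is assigned type $i$ with probability $p_i$, and then, given type $i$, it attaches by an edge to each particular existing vertex of type $j$ with probability $\omega_{ij}/\sum_{l=1}^K n_l\omega_{il}$, where $n_l$ is the current number of type $l$ vertices. All random choices are independent. Edges are directed from parent (earlier vertex) to child; out-degree is the number of children. *)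

(* Defs.v *)
From HB Require Import structures.
From mathcomp Require Import all_boot all_order all_algebra all_fingroup.
From mathcomp Require Import all_classical all_reals all_analysis.
Set Implicit Arguments. Unset Strict Implicit. Unset Printing Implicit Defensive.
Import Order.TTheory GRing.Theory Num.Theory.
Local Open Scope ring_scope.

Section CWRT.
Variable R : realType.
Variable K : nat.

(* A state of the tree: vertex v (0-based, paper's vertex v+1) is given by
   (type of v, parent of v); the root has parent None. *)
Definition cwrt_state := seq ('I_K * option nat).

Definition fdist (X : Type) := seq (R * X).

Definition fbind (X Y : Type) (d : fdist X) (f : X -> fdist Y) : fdist Y :=
  flatten [seq [seq (xw.1 * yw.1, yw.2) | yw <- f xw.2] | xw <- d].

Definition prob (X : Type) (d : fdist X) (P : X -> bool) : R :=
  \sum_(xw <- d) (if P xw.2 then xw.1 else 0).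

(* Uniform random recursive tree on m vertices (parent pointers only). *)
Fixpoint urrt (m : nat) : fdist (seq (option nat)) :=
  match m with
  | 0 => [:: (1, [::])]
  | 1 => [:: (1, [:: None])]
  | m'.+1 => fbind (urrt m')
      (fun s => [seq ((m'%:R)^-1, rcons s (Some u)) | u <- iota 0 m'])
  end.

(* Initial tree: URRT on K vertices, types assigned by a uniform random
   permutation of the types (vertex v gets type sigma v). *)
Definition cwrt_init : fdist cwrt_state :=
  fbind [seq ((K`!%:R)^-1, sigma) | sigma <- enum [set: {perm 'I_K}]]
    (fun sigma => [seq (tw.1, zip [seq sigma i | i <- enum 'I_K] tw.2)
                  | tw <- urrt K]).

Definition cwrt_step (p : 'I_K -> R) (w : 'I_K -> 'I_K -> R)
    (s : cwrt_state) : fdist cwrt_state :=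
  flatten [seq
    [seq (p i * (w i ue.2.1 / \sum_(e <- s) w i e.1), rcons s (i, Some ue.1))
    | ue <- zip (iota 0 (size s)) s]
  | i <- enum 'I_K].

(* Law of the tree with n vertices (meaningful for n >= K). *)
Definition cwrt (p : 'I_K -> R) (w : 'I_K -> 'I_K -> R) (n : nat)
  : fdist cwrt_state :=
  iter (n - K) (fun d => fbind d (cwrt_step p w)) cwrt_init.

Definition outdeg (s : cwrt_state) (u : nat) : nat :=
  count (fun e => e.2 == Some u) s.

Definition Nk (k : nat) (s : cwrt_state) : nat :=
  count (fun u => outdeg s u == k) (iota 0 (size s)).

Definition r_tilde (p : 'I_K -> R) (w : 'I_K -> 'I_K -> R) (i : 'I_K) : R :=
  \sum_j p j * w j i / \sum_l p l * w j l.

Definition c_tilde (p : 'I_K -> R) (w : 'I_K -> 'I_K -> R) (k : nat) : R :=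
  \sum_i p i / (1 + r_tilde p w i) * (r_tilde p w i / (1 + r_tilde p w i)) ^+ k.

End CWRT.

(* Main.v *)
Require Import Defs.
From HB Require Import structures.
From mathcomp Require Import all_boot all_order all_algebra all_fingroup.
From mathcomp Require Import all_classical all_reals all_analysis.
From mathcomp Require Import ring lra zify.
Import Order.TTheory GRing.Theory Num.Theory.
Local Open Scope classical_set_scope.
Local Open Scope ring_scope.

Set Implicit Arguments. Unset Strict Implicit. Unset Printing Implicit Defensive.

Section ExS.
Variable R : realType.

Definition Ex (X : Type) (d : fdist R X) (f : X -> R) : R :=
  \sum_(xw <- d) xw.1 * f xw.2.

Lemma Ex_fbind X Y (d : fdist R X) (g : X -> fdist R Y) f :
  Ex (fbind d g) f = Ex d (fun x => Ex (g x) f).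
Proof.
rewrite /Ex /fbind big_flatten big_map; apply: eq_bigr => xw _.
rewrite big_map mulr_sumr; apply: eq_bigr => yw _ /=; by rewrite mulrA.
Qed.

Definition gd (X : eqType) (Q : X -> Prop) (d : fdist R X) :=
  (forall xw, xw \in d -> 0 <= xw.1 /\ Q xw.2) /\ Ex d (fun _ => 1) = 1.

Lemma Ex_le (X : eqType) (Q : X -> Prop) d f g :
  (forall xw, xw \in d -> 0 <= xw.1 /\ Q xw.2) ->
  (forall x, Q x -> f x <= g x) -> Ex d f <= Ex d g.
Proof.
move=> H Hfg; rewrite /Ex big_seq [X in _ <= X]big_seq; apply: ler_sum => xw hin.
have [h1 h2] := H xw hin; exact: ler_wpM2l (Hfg _ h2).
Qed.

Lemma Ex_eq (X : eqType) (Q : X -> Prop) d f g :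
  (forall xw, xw \in d -> 0 <= xw.1 /\ Q xw.2) ->
  (forall x, Q x -> f x = g x) -> Ex d f = Ex d g.
Proof.
move=> H Hfg; rewrite /Ex big_seq [X in _ = X]big_seq; apply: eq_bigr => xw hin.
have [h1 h2] := H xw hin; by rewrite Hfg.
Qed.

Lemma ExD X (d : fdist R X) f g : Ex d (fun x => f x + g x) = Ex d f + Ex d g.
Proof. by rewrite /Ex -big_split; apply: eq_bigr => xw _; rewrite mulrDr. Qed.

Lemma ExB X (d : fdist R X) f g : Ex d (fun x => f x - g x) = Ex d f - Ex d g.
Proof. by rewrite /Ex -sumrB; apply: eq_bigr => xw _; rewrite mulrBr. Qed.

Lemma ExZ X (d : fdist R X) c f : Ex d (fun x => c * f x) = c * Ex d f.
Proof. by rewrite /Ex mulr_sumr; apply: eq_bigr => xw _; rewrite mulrCA. Qed.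

Lemma Ex_const X (d : fdist R X) c : Ex d (fun _ => c) = c * Ex d (fun _ => 1).
Proof. by rewrite -ExZ; apply: eq_bigr => xw _; rewrite mulr1. Qed.

Lemma Ex_sum X (I : finType) (d : fdist R X) (F : I -> X -> R) :
  Ex d (fun x => \sum_i F i x) = \sum_i Ex d (F i).
Proof.
rewrite /Ex exchange_big /=; apply: eq_bigr => xw _; by rewrite mulr_sumr.
Qed.

Lemma gd_const (X : eqType) Q (d : fdist R X) c : gd Q d -> Ex d (fun _ => c) = c.
Proof. by move=> [_ H]; rewrite Ex_const H mulr1. Qed.

Lemma gd_fbind (X Y : eqType) (Q : X -> Prop) (Q' : Y -> Prop) d (g : X -> fdist R Y) :
  gd Q d -> (forall x, Q x -> gd Q' (g x)) -> gd Q' (fbind d g).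
Proof.
move=> [H1 H2] Hg; split.
  move=> yw /flattenP [l hl hyl].
  move/mapP: hl => [xw hxw El]; rewrite El in hyl.
  move/mapP: hyl => [y hy ->] /=.
  have [h1 h2] := H1 _ hxw; have [G1 _] := Hg _ h2.
  have [g1 g2] := G1 _ hy; split => //; exact: mulr_ge0.
rewrite Ex_fbind -[RHS]H2; apply: (Ex_eq H1) => x hx; by have [_ ->] := Hg _ hx.
Qed.

Lemma prob_Ex X (d : fdist R X) P : prob d P = Ex d (fun x => (P x)%:R).
Proof. by rewrite /prob /Ex; apply: eq_bigr => xw _; case: (P xw.2); rewrite ?mulr1 ?mulr0. Qed.

End ExS.

Section B.
Variable R : realType.

Lemma sum_seq_const (T : Type) (r : seq T) (c : R) : \sum_(x <- r) c = c *+ size r.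
Proof. elim: r => [|x r IH]; by rewrite ?big_nil ?big_cons ?IH ?mulrS. Qed.

Definition vpar (m : nat) (o : option nat) := if o is Some u then (u < m)%N else true.

Lemma vpar_le m m' o : (m <= m')%N -> vpar m o -> vpar m' o.
Proof. by case: o => //= u h1 h2; exact: leq_trans h2 h1. Qed.

Lemma urrt_SS m : urrt R m.+2 = fbind (urrt R m.+1)
      (fun s => [seq ((m.+1%:R)^-1, rcons s (Some u)) | u <- iota 0 m.+1]).
Proof. by []. Qed.

Lemma urrt_gd m : gd (fun t : seq (option nat) => (size t == m) && all (vpar m) t) (urrt R m).
Proof.
elim: m => [|[|m] IH].
- split; last by rewrite /Ex big_cons big_nil mulr1 addr0.
  by move=> xw; rewrite inE => /eqP -> /=.
- split; last by rewrite /Ex big_cons big_nil mulr1 addr0.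
  by move=> xw; rewrite inE => /eqP -> /=.
- rewrite urrt_SS; apply: (gd_fbind IH) => t /andP [/eqP st alt].
  split.
    move=> xw /mapP [u hu ->] /=; split; first by rewrite invr_ge0 ler0n.
    rewrite size_rcons st eqxx all_rcons /=.
    rewrite mem_iota add0n in hu; rewrite (leq_trans hu) //=.
    apply: sub_all alt => o; exact: vpar_le.
  rewrite /Ex big_map /=.
  under eq_bigr do rewrite mulr1.
  by rewrite sum_seq_const /= size_iota -[_^-1 *+ _]mulr_natl mulfV // pnatr_eq0.
Qed.
Variable K : nat.

Definition valid (n : nat) (s : cwrt_state K) :=
  (size s == n) && all (fun e => vpar n e.2) s.

Lemma init_gd : gd (valid K) (cwrt_init R K).
Proof.
apply: (@gd_fbind _ _ _ (fun _ => True)).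
  split; first by move=> xw /mapP [sg _ ->] /=; split => //; rewrite invr_ge0 ler0n.
  rewrite /Ex big_map.
  under eq_bigr do rewrite mulr1.
  rewrite sum_seq_const -cardE cardsT card_Sn -[_^-1 *+ _]mulr_natl mulfV //.
move=> sg _; have [H1 H2] := urrt_gd K; split.
  move=> xw /mapP [tw htw ->] /=; have [h1 /andP [/eqP h2 h3]] := H1 _ htw.
  split => //; rewrite /valid size_zip size_map size_enum_ord h2 minnn eqxx /=.
  have -> : all (fun e : 'I_K * option nat => vpar K e.2) (zip [seq sg i | i <- enum 'I_K] tw.2)
     = all (vpar K) (unzip2 (zip [seq sg i | i <- enum 'I_K] tw.2)) by rewrite all_map.
  by rewrite unzip2_zip // size_map size_enum_ord h2.
by rewrite /Ex big_map.
Qed.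

End B.

Section E.
Variable R : realType.

Definition small (u : nat -> R) :=
  forall e, 0 < e -> exists N, forall n, (N <= n)%N -> u n <= e * n%:R.
Definition small2 (u : nat -> R) :=
  forall e, 0 < e -> exists N, forall n, (N <= n)%N -> u n <= e * n%:R ^+ 2.

Lemma big_nat_gt (x : R) : exists N : nat, x < N%:R.
Proof.
exists (Num.Def.archi_bound `|x|); apply: le_lt_trans (ler_norm x) _.
exact: archi_boundP.
Qed.

Lemma small2_of_rec N0 (D h : nat -> R) :
  (forall n, (N0 <= n)%N -> D n.+1 <= D n + h n) -> small h -> small2 D.
Proof.
move=> Hrec Hh e e0.
have e2 : 0 < e / 2 by rewrite divr_gt0.
have [N1 HN1] := Hh (e / 2) e2.
set N := maxn N0 N1.
have Hind : forall d, D (N + d)%N <= D N + e / 2 * (N + d)%N%:R * d%:R.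
  elim=> [|d IH]; first by rewrite addn0 mulr0 addr0.
  rewrite addnS; apply: le_trans (Hrec _ _) _; first by rewrite /N; lia.
  have h1 := HN1 (N + d)%N (ltac:(rewrite /N; lia)).
  have key : e / 2 * (N + d)%N%:R * d%:R + e / 2 * (N + d)%N%:R <= e / 2 * (N + d).+1%:R * d.+1%:R.
    rewrite -[(N + d).+1%:R]natr1 -[d.+1%:R]natr1.
    set E := e / 2; set x := (N + d)%N%:R; set y := d%:R.
    have hE : 0 <= E by exact: ltW.
    have hy : 0 <= y by exact: ler0n.
    have : 0 <= E * y by exact: mulr_ge0.
    move=> *; nra.
  lra.
have [N2 HN2] := big_nat_gt (D N / (e / 2)).
exists (maxn N N2.+1) => n hn.
have hnN : (N <= n)%N := leq_trans (leq_maxl _ _) hn.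
have hnN2 : (N2.+1 <= n)%N := leq_trans (leq_maxr _ _) hn.
have := Hind (n - N)%N; rewrite subnKC // => H.
apply: le_trans H _.
have hn1 : 1 <= n%:R :> R by rewrite ler1n (leq_trans _ hnN2).
have hN2n : N2%:R <= n%:R :> R by rewrite ler_nat ltnW.
have hd : (n - N)%N%:R <= n%:R :> R by rewrite ler_nat leq_subr.
have hd0 : 0 <= (n - N)%N%:R :> R by exact: ler0n.
have hDN : D N <= e / 2 * N2%:R.
  by rewrite mulrC -ler_pdivrMr //; exact: ltW.
have hE : 0 <= e / 2 by exact: ltW.
have t1 : e / 2 * N2%:R <= e / 2 * n%:R ^+ 2.
  apply: ler_wpM2l => //; apply: le_trans hN2n _; rewrite expr2 -[X in X <= _]mul1r.
  by apply: ler_wpM2r => //; exact: ler0n.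
have t2 : e / 2 * n%:R * (n - N)%N%:R <= e / 2 * n%:R ^+ 2.
  rewrite expr2 mulrA; apply: ler_wpM2l => //; apply: mulr_ge0 => //; exact: ler0n.
have -> : e * n%:R ^+ 2 = e / 2 * n%:R ^+ 2 + e / 2 * n%:R ^+ 2 by field.
lra.
Qed.

Lemma small_add u v : small u -> small v -> small (fun n => u n + v n).
Proof.
move=> hu hv e e0; have e2 : 0 < e / 2 by rewrite divr_gt0.
have [N1 H1] := hu _ e2; have [N2 H2] := hv _ e2.
exists (maxn N1 N2) => n hn.
have := H1 n (leq_trans (leq_maxl _ _) hn); have := H2 n (leq_trans (leq_maxr _ _) hn).
move=> *; lra.
Qed.

Lemma small_scale c u : 0 <= c -> small u -> small (fun n => c * u n).
Proof.
move=> c0 hu e e0; have e2 : 0 < e / (c + 1) by rewrite divr_gt0 // ltr_pwDr.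
have [N1 H1] := hu _ e2; exists N1 => n hn; have h := H1 n hn.
have hn0 : 0 <= n%:R :> R by exact: ler0n.
apply: le_trans (ler_wpM2l c0 h) _.
have -> : c * (e / (c + 1) * n%:R) = e * n%:R * (c / (c + 1)).
  by field; rewrite gt_eqF // ltr_pwDr.
rewrite -[X in _ <= X]mulr1; apply: ler_wpM2l; first exact: mulr_ge0 (ltW e0) hn0.
by rewrite ler_pdivrMr ?mul1r ?lerDl // ltr_pwDr.
Qed.

Lemma small_const c : small (fun _ => c).
Proof.
move=> e e0; have [N HN] := big_nat_gt (c / e).
exists N => n hn; rewrite mulrC -ler_pdivrMr //.
apply: le_trans (ltW HN) _; by rewrite ler_nat.
Qed.

Lemma small_le u v : (forall n, u n <= v n) -> small v -> small u.
Proof. move=> H hv e e0; have [N HN] := hv e e0; exists N => n hn; exact: le_trans (H n) (HN n hn). Qed.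

Lemma small_sum (I : finType) (F : I -> nat -> R) :
  (forall i, small (F i)) -> small (fun n => \sum_i F i n).
Proof.
move=> H; rewrite /index_enum; elim: (Finite.enum I) => [|x r IH].
  by under eq_fun do rewrite big_nil; exact: small_const.
under eq_fun do rewrite big_cons; exact: small_add.
Qed.

End E.

Section C.
Variable R : realType.
Variable K : nat.
Variable p : 'I_K -> R.
Variable w : 'I_K -> 'I_K -> R.
Hypothesis hK0 : (0 < K)%N.
Hypothesis hp0 : forall i, 0 <= p i.
Hypothesis hp1 : \sum_i p i = 1.
Hypothesis hw : forall i j, 0 < w i j.

Definition i0 : 'I_K := Ordinal hK0.
Definition x0 : 'I_K * option nat := (i0, None).
Definition typ (s : cwrt_state K) v := (nth x0 s v).1.
Definition Sj j (s : cwrt_state K) := \sum_(v < size s) w j (typ s v).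
Definition Cnt i (P : nat -> bool) (s : cwrt_state K) : R :=
  \sum_(v < size s) ((typ s v == i) && P (outdeg s v))%:R.
Definition W j s (v : nat) := p j * (w j (typ s v) / Sj j s).

Lemma sum_seq_nth (F : 'I_K * option nat -> R) (s : cwrt_state K) :
  \sum_(e <- s) F e = \sum_(v < size s) F (nth x0 s v).
Proof. by rewrite (big_nth x0) big_mkord. Qed.

Lemma step_Ex s f : Ex (cwrt_step p w s) f =
  \sum_j \sum_(v < size s) W j s v * f (rcons s (j, Some (nat_of_ord v))).
Proof.
rewrite /Ex /cwrt_step big_flatten big_map big_enum /=; apply: eq_bigr => j _.
rewrite big_map (big_nth (0%N, x0)) size_zip size_iota minnn big_mkord.
apply: eq_bigr => v _; rewrite nth_zip ?size_iota // nth_iota // add0n /=.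
by rewrite /W /Sj (sum_seq_nth (fun e => w j e.1)). Qed.

Definition wmin := (\sum_i \sum_j (w i j)^-1)^-1.

Lemma le_sum_term (I : finType) (F : I -> R) i : (forall j, 0 <= F j) -> F i <= \sum_j F j.
Proof. by move=> H; rewrite (bigD1 i) //= lerDl sumr_ge0. Qed.

Lemma wmin_gt0 : 0 < wmin.
Proof.
rewrite /wmin invr_gt0.
have h1 : 0 < (w i0 i0)^-1 by rewrite invr_gt0.
have h2 : (w i0 i0)^-1 <= \sum_j (w i0 j)^-1.
  by apply: (@le_sum_term _ (fun j => (w i0 j)^-1)) => j; rewrite invr_ge0 ltW.
have h3 : \sum_j (w i0 j)^-1 <= \sum_i \sum_j (w i j)^-1.
  apply: (@le_sum_term _ (fun i => \sum_j (w i j)^-1)) => i.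
  by apply: sumr_ge0 => j _; rewrite invr_ge0 ltW.
exact: lt_le_trans h1 (le_trans h2 h3).
Qed.

Lemma wmin_le i j : wmin <= w i j.
Proof.
have h1 : (w i j)^-1 <= \sum_i \sum_j (w i j)^-1.
  apply: (le_trans _ (@le_sum_term _ (fun i => \sum_j (w i j)^-1) i _)).
    by apply: le_sum_term => j'; rewrite invr_ge0 ltW.
  by move=> i'; apply: sumr_ge0 => j' _; rewrite invr_ge0 ltW.
rewrite /wmin -[w i j]invrK lef_pV2 // ?posrE ?invr_gt0 //.
by move: wmin_gt0; rewrite /wmin invr_gt0.
Qed.


Lemma Sj_ge j s : wmin * (size s)%:R <= Sj j s.
Proof.
have -> : wmin * (size s)%:R = \sum_(v < size s) wmin.
  by rewrite sumr_const card_ord mulr_natr.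
by apply: ler_sum => v _; exact: wmin_le.
Qed.

Lemma W_ge0 j s v : 0 <= W j s v.
Proof.
rewrite /W; apply: mulr_ge0 => //; apply: divr_ge0; first exact: ltW.
by apply: sumr_ge0 => v' _; exact: ltW.
Qed.

Lemma Sj_gt0 j s : (0 < size s)%N -> 0 < Sj j s.
Proof.
move=> h; apply: lt_le_trans (Sj_ge j s); apply: mulr_gt0; first exact: wmin_gt0.
by rewrite ltr0n.
Qed.

Lemma sumW j s : (0 < size s)%N -> \sum_(v < size s) W j s v = p j.
Proof.
move=> h; rewrite /W -mulr_sumr -mulr_suml -/(Sj j s) mulfV ?mulr1 //.
by rewrite gt_eqF // Sj_gt0.
Qed.

Lemma step_le s f g : (forall j (v : 'I_(size s)), f (rcons s (j, Some (nat_of_ord v))) <= g (rcons s (j, Some (nat_of_ord v)))) ->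
  Ex (cwrt_step p w s) f <= Ex (cwrt_step p w s) g.
Proof.
move=> H; rewrite !step_Ex; apply: ler_sum => j _; apply: ler_sum => v _.
by apply: ler_wpM2l; [exact: W_ge0 | exact: H].
Qed.

Lemma step_eq s f g : (forall j (v : 'I_(size s)), f (rcons s (j, Some (nat_of_ord v))) = g (rcons s (j, Some (nat_of_ord v)))) ->
  Ex (cwrt_step p w s) f = Ex (cwrt_step p w s) g.
Proof.
move=> H; rewrite !step_Ex; apply: eq_bigr => j _; apply: eq_bigr => v _.
by rewrite H.
Qed.

Lemma step_mass s : (0 < size s)%N -> Ex (cwrt_step p w s) (fun _ => 1) = 1.
Proof.
move=> h; rewrite step_Ex -[RHS]hp1; apply: eq_bigr => j _.
by under eq_bigr do rewrite mulr1; rewrite sumW.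
Qed.

Lemma step_gd n s : valid n s -> (0 < n)%N -> gd (valid n.+1) (cwrt_step p w s).
Proof.
move=> /andP [/eqP sn alls] n0; split; last by rewrite step_mass // sn.
move=> xw /flattenP [l hl hxl]; move/mapP: hl => [i _ El]; rewrite El in hxl.
move/mapP: hxl => [ue hue ->] /=; split.
  apply: mulr_ge0 => //; apply: divr_ge0; first exact: ltW.
  by apply: sumr_ge0 => e _; exact: ltW.
have hu : (ue.1 < n)%N.
  have : ue.1 \in unzip1 (zip (iota 0 (size s)) s) by apply: map_f.
  by rewrite unzip1_zip ?size_iota // mem_iota add0n sn.
rewrite /valid size_rcons sn eqxx all_rcons /= (leq_trans hu) //=.
apply: sub_all alls => e; exact: vpar_le.
Qed.

Lemma outdeg_rcons (s : cwrt_state K) j u v :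
  outdeg (rcons s (j, Some u)) v = (outdeg s v + (u == v))%N.
Proof. by rewrite /outdeg -cats1 count_cat /= addn0. Qed.

Lemma outdeg_new n (s : cwrt_state K) : valid n s -> outdeg s n = 0%N.
Proof.
move=> /andP [_ alls]; rewrite /outdeg (eq_in_count (a2 := pred0)) ?count_pred0 //.
move=> e he /=; move/allP: alls => /(_ e he); case: e.2 => //= u hu.
by apply/negbTE; apply/eqP => -[E]; rewrite E ltnn in hu.
Qed.

Lemma sum_bump n (g : nat -> bool -> R) (u : nat) : (u < n)%N ->
  \sum_(v < n) g v (u == v) = \sum_(v < n) g v false + g u true - g u false.
Proof.
move=> hu; rewrite (bigD1 (Ordinal hu)) //= [X in _ = X + _ - _](bigD1 (Ordinal hu)) //= eqxx.
have -> : \sum_(i < n | i != Ordinal hu) g i (u == i) = \sum_(i < n | i != Ordinal hu) g i false.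
  apply: eq_bigr => v hv; congr (g _ _); apply/negbTE; apply: contra hv => /eqP E.
  by apply/eqP; apply: val_inj; rewrite /= E.
by ring. Qed.

Lemma typ_rcons (s : cwrt_state K) x v : (v < size s)%N -> typ (rcons s x) v = typ s v.
Proof. by move=> h; rewrite /typ nth_rcons h. Qed.

Lemma Cnt_rcons n (s : cwrt_state K) i P j u : valid n s -> (u < n)%N ->
  Cnt i P (rcons s (j, Some u)) = Cnt i P s +
    (((typ s u == i) && P (outdeg s u).+1)%:R - ((typ s u == i) && P (outdeg s u))%:R)
    + ((j == i) && P 0%N)%:R.
Proof.
move=> hv hu; have sn : size s = n by case/andP: hv => /eqP.
rewrite /Cnt size_rcons big_ord_recr /=; congr (_ + _); last first.
  rewrite /typ nth_rcons ltnn eqxx /= outdeg_rcons.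
  have -> : outdeg s (size s) = 0%N by rewrite sn; exact: outdeg_new hv.
  by rewrite add0n (_ : (u == size s) = false) // sn; apply/negbTE; rewrite neq_ltn hu.
under eq_bigr => v _ do rewrite typ_rcons // outdeg_rcons.
rewrite (sum_bump (fun v b => ((typ s v == i) && P (outdeg s v + b)%N)%:R)) ?sn //.
have E0 : forall d : nat, (d + false)%N = d := addn0.
have E1 : forall d : nat, (d + true)%N = d.+1 := addn1.
rewrite addrA; congr (_ + _ - _); [apply: eq_bigr => v _; by rewrite E0 | by rewrite E1 | by rewrite E0].
Qed.

Lemma step_Cnt n s i P : valid n s -> (0 < n)%N ->
  Ex (cwrt_step p w s) (Cnt i P) = Cnt i P s + p i * (P 0%N)%:R +
    \sum_j p j * w j i / Sj j s * (Cnt i (fun d => P d.+1) s - Cnt i P s).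
Proof.
move=> hv n0; have sn : size s = n by case/andP: hv => /eqP.
have Hj : forall j, \sum_(v < size s) W j s v * Cnt i P (rcons s (j, Some (nat_of_ord v))) =
   p j * (Cnt i P s + ((j == i) && P 0%N)%:R) +
   p j * w j i / Sj j s * (Cnt i (fun d => P d.+1) s - Cnt i P s).
  move=> j.
  transitivity (\sum_(v < size s) (W j s v * (Cnt i P s + ((j == i) && P 0%N)%:R) +
     p j * w j i / Sj j s * (((typ s v == i) && P (outdeg s v).+1)%:R - ((typ s v == i) && P (outdeg s v))%:R))).
    apply: eq_bigr => v _; rewrite (Cnt_rcons _ _ _ hv); last by rewrite -sn ltn_ord.
    case E: (typ s v == i); last by rewrite /=; ring.
    by rewrite /W (eqP E); ring.
  rewrite big_split /= -mulr_suml sumW; last by rewrite sn.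
  by rewrite -mulr_sumr sumrB.
rewrite step_Ex; under eq_bigr do rewrite Hj.
rewrite big_split /=; congr (_ + _).
under eq_bigr do rewrite mulrDr.
rewrite big_split /=; congr (_ + _); first by rewrite -mulr_suml hp1 mul1r.
rewrite (bigD1 i) //= eqxx /= big1 ?addr0 // => j hj.
by rewrite (negbTE hj) /= mulr0.
Qed.

Lemma key_real (Y A B Ya n S q a c M m : R) :
  0 < n -> 0 < q -> 0 < m -> m * n <= S -> `|Y| <= M * n -> `|A - B| <= n ->
  A = Ya + n * a -> B = Y + n * c ->
  Y * ((A - B) / S - (a - c) / q) <= M / (m * q) * `|n * q - S| + M / q * `|Ya|.
Proof.
move=> n0 q0 m0 hS hY hAB hA hB.
have S0 : 0 < S by apply: lt_le_trans hS; exact: mulr_gt0.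
have nq0 : 0 < n * q by exact: mulr_gt0.
have E : Y * ((A - B) / S - (a - c) / q) =
   (Y / (n * q)) * ((A - B) / S) * (n * q - S) + (Y / (n * q)) * Ya - Y ^+ 2 / (n * q).
  rewrite hA hB; field.
  by rewrite (gt_eqF n0) (gt_eqF q0) (gt_eqF S0).
have h1 : `|(A - B) / S| <= m^-1.
  rewrite normf_div (gtr0_norm S0) ler_pdivrMr //; apply: le_trans hAB _.
  by rewrite mulrC ler_pdivlMr // mulrC.
have h2 : `|Y / (n * q)| <= M / q.
  rewrite normf_div (gtr0_norm nq0) ler_pdivrMr //.
  have -> : M / q * (n * q) = M * n by field; rewrite (gt_eqF q0).
  exact: hY.
have hM : 0 <= M / q by exact: le_trans (normr_ge0 _) h2.
have t1 : (Y / (n * q)) * ((A - B) / S) * (n * q - S) <= M / (m * q) * `|n * q - S|.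
  move: h1 h2; set u := Y / (n * q); set v := (A - B) / S => h1 h2.
  apply: le_trans (ler_norm _) _; rewrite normrM (normrM u v).
  have -> : M / (m * q) = M / q * m^-1 by field; rewrite (gt_eqF q0) (gt_eqF m0).
  apply: ler_wpM2r; first exact: normr_ge0.
  exact: ler_pM (normr_ge0 _) (normr_ge0 _) h2 h1.
have t2 : (Y / (n * q)) * Ya <= M / q * `|Ya|.
  apply: le_trans (ler_norm _) _; rewrite normrM.
  by apply: ler_wpM2r => //; exact: normr_ge0.
have t3 : 0 <= Y ^+ 2 / (n * q) by apply: divr_ge0; [exact: sqr_ge0 | exact: ltW].
rewrite E; lra.
Qed.

Hypothesis hpi0 : 0 < p i0.

Definition q j := \sum_l p l * w j l.
Definition rr i := r_tilde p w i.
Definition cc i k := p i / (1 + rr i) * (rr i / (1 + rr i)) ^+ k.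
Definition ccm i k := if k is k'.+1 then cc i k' else 0.

Lemma q_gt0 j : 0 < q j.
Proof.
rewrite /q; apply: (lt_le_trans _ (@le_sum_term _ (fun l => p l * w j l) i0 _)).
  exact: mulr_gt0.
by move=> l; apply: mulr_ge0 => //; exact: ltW.
Qed.

Lemma rr_ge0 i : 0 <= rr i.
Proof.
rewrite /rr /r_tilde; apply: sumr_ge0 => j _; apply: divr_ge0.
  by apply: mulr_ge0 => //; exact: ltW.
exact: ltW (q_gt0 j).
Qed.

Lemma rr_E i : rr i = \sum_j p j * w j i / q j.
Proof. by []. Qed.

Lemma cc_fix i k : cc i k = p i * (k == 0)%N%:R + rr i * (ccm i k - cc i k).
Proof.
have h : 1 + rr i != 0 by rewrite gt_eqF // ltr_pwDl // rr_ge0.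
case: k => [|k] /=; rewrite /cc.
  rewrite expr0 mulr1 mulr1; field; exact: h.
rewrite exprS; field; exact: h.
Qed.

Lemma Cnt_ge0 i P s : 0 <= Cnt i P s.
Proof. by apply: sumr_ge0 => v _; exact: ler0n. Qed.

Lemma Cnt_le i P s : Cnt i P s <= (size s)%:R.
Proof.
rewrite /Cnt -[X in _ <= X%:R]card_ord -sumr_const; apply: ler_sum => v _.
by case: (_ && _).
Qed.

Lemma Cnt_diff n s i P j (v : nat) : valid n s -> (v < n)%N ->
  `|Cnt i P (rcons s (j, Some v)) - Cnt i P s| <= 3.
Proof.
move=> hv hu; have E : forall C x y : R, C + x + y - C = x + y by move=> *; ring.
rewrite (Cnt_rcons _ _ _ hv hu) E.
apply: le_trans (ler_normD _ _) _.
apply: le_trans (lerD (ler_normB _ _) (lexx _)) _.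
case: (_ && _); case: (_ && _); case: (_ && _); rewrite /= ?normr0 ?normr1 ?normrN ?subr0 ?sub0r ?normr0 ?normr1 ?normrN. all: lra.
Qed.

Lemma Sj_decomp j s : Sj j s = \sum_l w j l * Cnt l (fun _ => true) s.
Proof.
rewrite /Sj /Cnt; under [RHS]eq_bigr do rewrite mulr_sumr.
rewrite exchange_big /=; apply: eq_bigr => v _.
rewrite (bigD1 (typ s v)) //= eqxx /= mulr1 big1 ?addr0 // => l hl.
by rewrite eq_sym (negbTE hl) mulr0.
Qed.

Lemma step_sq n s (X : cwrt_state K -> R) B : valid n s -> (0 < n)%N ->
  (forall j (v : 'I_(size s)), `|X (rcons s (j, Some (nat_of_ord v))) - X s| <= B) ->
  Ex (cwrt_step p w s) (fun s' => X s' ^+ 2) <=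
    X s ^+ 2 + 2 * X s * (Ex (cwrt_step p w s) X - X s) + B ^+ 2.
Proof.
move=> hv n0 hB; have sn : size s = n by case/andP: hv => /eqP.
have m1 : Ex (cwrt_step p w s) (fun _ => 1) = 1 by rewrite step_mass // sn.
have -> : Ex (cwrt_step p w s) (fun s' => X s' ^+ 2) =
    Ex (cwrt_step p w s) (fun s' => X s ^+ 2 + 2 * X s * (X s' - X s) + (X s' - X s) ^+ 2).
  by apply: eq_bigr => xw _; congr (_ * _); ring.
rewrite !ExD Ex_const m1 mulr1 ExZ ExB [Ex _ (fun _ => X s)]Ex_const m1 mulr1.
apply: lerD => //.
have <- : Ex (cwrt_step p w s) (fun _ => B ^+ 2) = B ^+ 2 by rewrite Ex_const m1 mulr1.
apply: step_le => j v; have := hB j v; rewrite ler_norml => /andP [h1 h2]; nra.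
Qed.

Definition Xc i P c s := Cnt i P s - (size s)%:R * c.

Lemma Xc_diff n s i P c j (v : nat) : valid n s -> (v < n)%N ->
  `|Xc i P c (rcons s (j, Some v)) - Xc i P c s| <= 3 + `|c|.
Proof.
move=> hv hu; rewrite /Xc size_rcons.
have -> : Cnt i P (rcons s (j, Some v)) - (size s).+1%:R * c - (Cnt i P s - (size s)%:R * c)
   = (Cnt i P (rcons s (j, Some v)) - Cnt i P s) - c by rewrite -addn1 natrD; ring.
apply: le_trans (ler_normB _ _) _; apply: lerD => //; exact: Cnt_diff hv hu.
Qed.

Lemma Xc_drift n s i P c : valid n s -> (0 < n)%N ->
  Ex (cwrt_step p w s) (Xc i P c) - Xc i P c s =
  Ex (cwrt_step p w s) (Cnt i P) - Cnt i P s - c.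
Proof.
move=> hv n0; have sn : size s = n by case/andP: hv => /eqP.
rewrite /Xc ExB.
have -> : Ex (cwrt_step p w s) (fun s' => (size s')%:R * c) = (size s).+1%:R * c.
  rewrite (@step_eq _ _ (fun _ => (size s).+1%:R * c)); last by move=> j v; rewrite size_rcons.
  by rewrite Ex_const step_mass ?sn // mulr1.
by rewrite -addn1 natrD; ring.
Qed.

Definition G i k s :=
  2 * \sum_j (p j * w j i * ((1 + `|cc i k|) / (wmin * q j) *
        \sum_l w j l * `|Xc l (fun _ => true) (p l) s|
      + (1 + `|cc i k|) / q j * `|Xc i (fun d => d.+1 == k) (ccm i k) s|))
  + (3 + `|cc i k|) ^+ 2.

Lemma Xc_bound i P c s : `|Xc i P c s| <= (1 + `|c|) * (size s)%:R.
Proof.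
rewrite /Xc; apply: le_trans (ler_normB _ _) _.
rewrite normrM normr_nat (ger0_norm (Cnt_ge0 _ _ _)) mulrDl mul1r mulrC.
by apply: lerD => //; exact: Cnt_le.
Qed.

Lemma level_ineq n s i k : valid n s -> (0 < n)%N ->
  Ex (cwrt_step p w s) (fun s' => Xc i (fun d => d == k) (cc i k) s' ^+ 2) <=
  Xc i (fun d => d == k) (cc i k) s ^+ 2 + G i k s.
Proof.
move=> hv n0; have sn : size s = n by case/andP: hv => /eqP.
set c := cc i k; set a := ccm i k; set M := 1 + `|c|.
set Y := Xc i (fun d => d == k) c; set Ya := Xc i (fun d => d.+1 == k) a.
set A := Cnt i (fun d => d.+1 == k) s; set B := Cnt i (fun d => d == k) s.
set nn := ((size s)%:R : R).
have nn0 : 0 < nn by rewrite /nn ltr0n sn.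
apply: le_trans (step_sq (B := 3 + `|c|) hv n0 _) _.
  by move=> j v; apply: Xc_diff hv _; rewrite -sn ltn_ord.
rewrite /G -/c -/a -/M -/Ya -addrA lerD2l lerD2r -mulrA ler_pM2l //.
rewrite (Xc_drift _ _ _ hv n0) (step_Cnt _ _ hv n0) -/A -/B.
have D : B + p i * (0 == k)%:R + \sum_j p j * w j i / Sj j s * (A - B) - B - c =
   \sum_j p j * w j i * ((A - B) / Sj j s - (a - c) / q j).
  have hc := cc_fix i k; rewrite -/c -/a eq_sym in hc.
  have hr : \sum_j p j * w j i * ((a - c) / q j) = rr i * (a - c).
    by rewrite rr_E mulr_suml; apply: eq_bigr => j _; rewrite mulrA mulrAC.
  have hs : \sum_j p j * w j i / Sj j s * (A - B) = \sum_j p j * w j i * ((A - B) / Sj j s).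
    by apply: eq_bigr => j _; rewrite [RHS]mulrA mulrAC.
  under [RHS]eq_bigr do rewrite mulrBr.
  rewrite sumrB hr hs; lra.
rewrite D mulr_sumr; apply: ler_sum => j _.
rewrite mulrCA; apply: ler_wpM2l; first by apply: mulr_ge0 => //; exact: ltW.
have hYb : `|Y s| <= M * nn by exact: Xc_bound.
have hAB : `|A - B| <= nn.
  rewrite ler_norml; have := Cnt_ge0 i (fun d => d.+1 == k) s; have := Cnt_le i (fun d => d.+1 == k) s.
  have := Cnt_ge0 i (fun d => d == k) s; have := Cnt_le i (fun d => d == k) s.
  rewrite -/A -/B -/nn => *; apply/andP; split; lra.
have key := @key_real (Y s) A B (Ya s) nn (Sj j s) (q j) a c M wmin nn0 (q_gt0 j) wmin_gt0 (Sj_ge j s) hYb hAB.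
apply: le_trans (key _ _) _.
- by rewrite /A /Ya /Xc /nn; ring.
- by rewrite /B /Y /Xc /nn; ring.
apply: lerD => //; apply: ler_wpM2l.
  by apply: divr_ge0; [rewrite /M; exact: addr_ge0 | apply: mulr_ge0; [exact: ltW wmin_gt0 | exact: ltW (q_gt0 j)]].
have -> : nn * q j - Sj j s = - \sum_l w j l * Xc l (fun _ => true) (p l) s.
  rewrite Sj_decomp /q mulr_sumr -sumrB -sumrN; apply: eq_bigr => l _.
  rewrite /Xc -/nn; ring.
rewrite normrN; apply: le_trans (ler_norm_sum _ _ _) _; apply: ler_sum => l _.
by rewrite normrM ger0_norm // ltW.
Qed.

Lemma type_ineq n s l : valid n s -> (0 < n)%N ->
  Ex (cwrt_step p w s) (fun s' => Xc l (fun _ => true) (p l) s' ^+ 2) <=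
  Xc l (fun _ => true) (p l) s ^+ 2 + (3 + `|p l|) ^+ 2.
Proof.
move=> hv n0; have sn : size s = n by case/andP: hv => /eqP.
apply: le_trans (step_sq (B := 3 + `|p l|) hv n0 _) _.
  by move=> j v; apply: Xc_diff hv _; rewrite -sn ltn_ord.
rewrite (Xc_drift _ _ _ hv n0) (step_Cnt _ _ hv n0) big1 ?addr0.
  have E0 : forall x y : R, x + y * true%:R - x - y = 0 by move=> *; rewrite mulr1; ring.
  by rewrite E0 mulr0 addr0.
by move=> j _; rewrite subrr mulr0.
Qed.

Lemma cwrt_S n : (K <= n)%N -> cwrt p w n.+1 = fbind (cwrt p w n) (cwrt_step p w).
Proof. by move=> h; rewrite /cwrt subSn // iterS. Qed.

Lemma cwrt_gd n : (K <= n)%N -> gd (valid n) (cwrt p w n).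
Proof.
move=> h; rewrite -(subnKC h); elim: (n - K)%N => [|d IH].
  rewrite addn0 /cwrt subnn /=; exact: init_gd.
rewrite addnS cwrt_S; last by lia.
apply: (gd_fbind IH) => s hs; apply: step_gd hs _; lia.
Qed.

Lemma cwrt_mass n : Ex (cwrt p w n) (fun _ => 1) = 1.
Proof.
case: (leqP K n) => h; first by case: (cwrt_gd h).
rewrite /cwrt (_ : (n - K)%N = 0%N) /=; last by lia.
by case: (init_gd R K).
Qed.

Lemma rec_gen (X H : cwrt_state K -> R) :
  (forall n s, (K <= n)%N -> valid n s ->
     Ex (cwrt_step p w s) (fun s' => X s' ^+ 2) <= X s ^+ 2 + H s) ->
  forall n, (K <= n)%N ->
  Ex (cwrt p w n.+1) (fun s => X s ^+ 2) <=
  Ex (cwrt p w n) (fun s => X s ^+ 2) + Ex (cwrt p w n) H.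
Proof.
move=> HX n hn; rewrite cwrt_S // Ex_fbind -ExD.
have [G1 _] := cwrt_gd hn; apply: (@Ex_le _ _ (valid n) (cwrt p w n) _ _ G1) => s hs /=; exact: (HX n s hn hs).
Qed.


Lemma abs_le_sq (x a : R) : 0 < a -> `|x| <= a + x ^+ 2 / a.
Proof.
move=> a0; have hx : x ^+ 2 = `|x| ^+ 2 by rewrite real_normK // num_real.
have : 0 <= `|x| by exact: normr_ge0.
case: (lerP `|x| a) => h1 h2.
  apply: le_trans h1 _; rewrite lerDl; apply: divr_ge0; [exact: sqr_ge0 | exact: ltW].
have : `|x| <= x ^+ 2 / a.
  rewrite ler_pdivlMr // hx expr2; apply: ler_wpM2l => //; exact: ltW.
move=> *; lra.
Qed.

Lemma small_abs (X : cwrt_state K -> R) :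
  small2 (fun n => Ex (cwrt p w n) (fun s => X s ^+ 2)) ->
  small (fun n => Ex (cwrt p w n) (fun s => `|X s|)).
Proof.
move=> H e e0; have e2 : 0 < e / 2 by rewrite divr_gt0.
have [N HN] := H ((e / 2) ^+ 2) (exprn_gt0 _ e2).
exists (maxn N (maxn K 1)) => n hn.
have hn1 : (0 < n)%N by lia.
have hKn : (K <= n)%N by lia.
have nn0 : 0 < n%:R :> R by rewrite ltr0n.
set a := e / 2 * n%:R.
have a0 : 0 < a by exact: mulr_gt0.
have [G1 _] := cwrt_gd hKn.
apply: le_trans (@Ex_le _ _ (valid n) (cwrt p w n) (fun s => `|X s|) (fun s => a + X s ^+ 2 / a) G1 _) _.
  by move=> s _; exact: abs_le_sq.
rewrite ExD Ex_const cwrt_mass mulr1.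
have -> : Ex (cwrt p w n) (fun s => X s ^+ 2 / a) = Ex (cwrt p w n) (fun s => X s ^+ 2) / a.
  by rewrite /Ex mulr_suml; apply: eq_bigr => xw _; rewrite mulrA.
have h := HN n (leq_trans (leq_maxl _ _) hn).
have : Ex (cwrt p w n) (fun s => X s ^+ 2) / a <= a.
  by rewrite ler_pdivrMr // /a -expr2 exprMn.
rewrite /a => *; have -> : e * n%:R = e / 2 * n%:R + e / 2 * n%:R by field.
lra.
Qed.

Lemma type_small l : small (fun n => Ex (cwrt p w n) (fun s => `|Xc l (fun _ => true) (p l) s|)).
Proof.
apply: small_abs; apply: (@small2_of_rec _ K _ (fun _ => (3 + `|p l|) ^+ 2)); last exact: small_const.
move=> n hn; apply: le_trans (rec_gen _ hn) _.
  by move=> m s hm hv; apply: type_ineq hv _; lia.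
by rewrite Ex_const cwrt_mass mulr1.
Qed.

Lemma level_small_step k i :
  small (fun n => Ex (cwrt p w n) (fun s => `|Xc i (fun d => d.+1 == k) (ccm i k) s|)) ->
  small (fun n => Ex (cwrt p w n) (fun s => `|Xc i (fun d => d == k) (cc i k) s|)).
Proof.
move=> Ha; apply: small_abs; apply: (@small2_of_rec _ K _ (fun n => Ex (cwrt p w n) (G i k))).
  by move=> n hn; apply: rec_gen hn => m s hm hv; apply: level_ineq hv _; lia.
set c := cc i k.
apply: (@small_le _ _ (fun n => 2 * \sum_j (p j * w j i * ((1 + `|c|) / (wmin * q j) *
        \sum_l w j l * Ex (cwrt p w n) (fun s => `|Xc l (fun _ => true) (p l) s|)
      + (1 + `|c|) / q j * Ex (cwrt p w n) (fun s => `|Xc i (fun d => d.+1 == k) (ccm i k) s|)))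
  + (3 + `|c|) ^+ 2)).
  move=> n; rewrite /G -/c ExD ExZ Ex_sum Ex_const cwrt_mass mulr1.
  under eq_bigr do rewrite ExZ ExD ExZ Ex_sum ExZ.
  under eq_bigr do under eq_bigr do rewrite ExZ.
  by [].
have hc0 : 0 <= 1 + `|c| by exact: addr_ge0.
apply: small_add; last exact: small_const.
apply: small_scale => //; apply: small_sum => j.
apply: small_scale; first by apply: mulr_ge0 => //; exact: ltW.
apply: small_add; apply: small_scale.
- by apply: divr_ge0 => //; apply: mulr_ge0; [exact: ltW wmin_gt0 | exact: ltW (q_gt0 j)].
- apply: small_sum => l; apply: small_scale; [exact: ltW | exact: type_small].
- by apply: divr_ge0 => //; exact: ltW (q_gt0 j).
- exact: Ha.
Qed.

Lemma level_small k i : small (fun n => Ex (cwrt p w n) (fun s => `|Xc i (fun d => d == k) (cc i k) s|)).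
Proof.
elim: k i => [|k IH] i; apply: level_small_step.
  apply: (@small_le _ _ (fun _ => 0)); last exact: small_const.
  move=> n; rewrite (_ : Ex _ _ = 0) //.
  rewrite /Ex big1 // => xw _; rewrite /Xc /ccm /Cnt big1 ?mulr0 ?subr0 ?normr0 ?mulr0 //.
  by move=> v _; rewrite andbF.
exact: IH.
Qed.

Lemma count_natr (T : Type) (a : pred T) (l : seq T) : (count a l)%:R = \sum_(x <- l) (a x)%:R :> R.
Proof. elim: l => [|x l IH]; by rewrite ?big_nil ?big_cons //= natrD IH. Qed.

Lemma Nk_sum k s : (Nk k s)%:R = \sum_i Cnt i (fun d => d == k) s.
Proof.
rewrite /Nk count_natr (_ : iota 0 (size s) = index_iota 0 (size s)); last by rewrite /index_iota subn0.
rewrite big_mkord /Cnt exchange_big /=; apply: eq_bigr => v _.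
rewrite (bigD1 (typ s v)) //= eqxx /= big1 ?addr0 // => l hl.
by rewrite eq_sym (negbTE hl).
Qed.

Lemma final k (eps : R) : 0 < eps ->
  (fun n : nat => prob (cwrt p w n)
        (fun s => eps < `| (Nk k s)%:R / n%:R - c_tilde p w k |)) @ \oo --> 0.
Proof.
move=> eps0; apply/cvgr0Pnorm_le => e e0.
have hs := small_sum (fun i => level_small k i).
have [N HN] := hs (e * eps) (mulr_gt0 e0 eps0).
exists (maxn N (maxn K 1)) => // n /= hn.
have hn1 : (0 < n)%N by lia.
have hKn : (K <= n)%N by lia.
have nn0 : 0 < n%:R :> R by rewrite ltr0n.
have [G1 _] := cwrt_gd hKn.
set F := fun s : cwrt_state K => \sum_i `|Xc i (fun d => d == k) (cc i k) s|.
have P0 : 0 <= prob (cwrt p w n) (fun s => eps < `| (Nk k s)%:R / n%:R - c_tilde p w k |).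
  rewrite prob_Ex; have := @Ex_le _ _ (valid n) (cwrt p w n) (fun _ => 0)
     (fun s => ((eps < `| (Nk k s)%:R / n%:R - c_tilde p w k |)%R)%:R) G1 (fun s _ => ler0n _ _).
  by rewrite Ex_const mul0r.
rewrite ger0_norm //.
rewrite prob_Ex; apply: le_trans (@Ex_le _ _ (valid n) (cwrt p w n) _ (fun s => F s / (eps * n%:R)) G1 _) _.
  move=> s /andP [/eqP sn _].
  have E : (Nk k s)%:R / n%:R - c_tilde p w k = (\sum_i Xc i (fun d => d == k) (cc i k) s) / n%:R.
    rewrite Nk_sum /Xc sumrB -mulr_sumr sn.
    have -> : c_tilde p w k = \sum_i cc i k by [].
    by field; rewrite gt_eqF.
  rewrite E; case: ltrP => h /=; last by apply: divr_ge0; [apply: sumr_ge0 => *; exact: normr_ge0 | apply: mulr_ge0; exact: ltW].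
  rewrite ler_pdivlMr ?mul1r ?mulr_gt0 //.
  rewrite normf_div (gtr0_norm nn0) ltr_pdivlMr // in h.
  by apply: le_trans (ltW h) _; exact: ler_norm_sum.
have -> : Ex (cwrt p w n) (fun s => F s / (eps * n%:R)) = Ex (cwrt p w n) F / (eps * n%:R).
  by rewrite /Ex mulr_suml; apply: eq_bigr => xw _; rewrite mulrA.
rewrite ler_pdivrMr ?mulr_gt0 // /F Ex_sum mulrA.
exact: HN (leq_trans (leq_maxl _ _) hn).
Qed.

End C.

Unset Implicit Arguments.

Theorem theorem3p8 (R : realType) (K : nat) (hK : (2 <= K)%N)
  (p : 'I_K -> R) (w : 'I_K -> 'I_K -> R)
  (hp0 : forall i, 0 <= p i) (hp1 : \sum_i p i = 1)
  (hpmax : forall i j : 'I_K, val j = 0%N -> p i <= p j /\ 0 < p j)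
  (hw : forall i j, 0 < w i j) (k : nat) :
  forall eps : R, 0 < eps ->
    (fun n : nat => prob (cwrt p w n)
        (fun s => eps < `| (Nk k s)%:R / n%:R - c_tilde p w k |))
      @ \oo --> 0.
Proof.
have hK0 : (0 < K)%N by exact: ltnW hK.
move=> eps eps0.
have hpi0 : 0 < p (i0 hK0) := (hpmax (i0 hK0) (i0 hK0) erefl).2.
exact: (final hp0 hp1 hw hpi0 k eps0).
Qed.
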